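(* Let $n\in\mathbb N\cup\{\omega\}$, $P$ an $n$-polygraph and $u$ a cell of $P^*$. There exist a finite $n$-polygraph $\tilde P$ (with finitely many generators in total), a monomorphism $F\colon\tilde P\to P$ of polygraphs and a cell $\tilde u$ of $\tilde P^*$ such that $F^*(\tilde u)=u$ and $\mathrm{supp}(\tilde u)=\bigsqcup_k\tilde P_k$.
   Context: An $n$-precategory is an $n$-globular set with identities $1_u$ and compositions $u\ast_iv$ satisfying the axioms of strict $n$-categories except the interchange law. An $n$-polygraph $P$ consists of sets $P_k$ of $k$-generators with globular sources and targets in the free precategory on lower generators; $P^*$ is the free $n$-precategory it generates, generators being identified with cells; morphisms are generator-wise maps compatible with sources/targets, inducing $F^*\colon P^*\to Q^*$. The support $\mathrm{supp}(u)\subseteq\bigsqcup_kP_k$ of a cell is defined inductively: $\mathrm{supp}(g)=\{g\}$ for $g\in P_0$; $\mathrm{supp}(g)=\{g\}\cup\mathrm{supp}(s(g))\cup\mathrm{supp}(t(g))$ for a generator $g\in P_{k+1}$; $\mathrm{supp}(1_{u'})=\mathrm{supp}(u')$; $\mathrm{supp}(u_1\ast_iu_2)=\mathrm{supp}(u_1)\cup\mathrm{supp}(u_2)$. *)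

(* Defs.v *)
From Stdlib Require Import Arith List.

(* n in N u {omega}: [Some m] is the natural number m, [None] is omega. *)
Definition le_inf (k : nat) (n : option nat) : Prop :=
  match n with None => True | Some m => k <= m end.

Inductive term (G : Type) : Type :=
| Gen  : G -> term G
| Id   : term G -> term G
| Comp : nat -> term G -> term G -> term G.

Arguments Gen {G} _.
Arguments Id {G} _.
Arguments Comp {G} _ _ _.

Fixpoint map_term {G H : Type} (f : G -> H) (t : term G) : term H :=
  match t with
  | Gen g => Gen (f g)
  | Id t' => Id (map_term f t')
  | Comp i t1 t2 => Comp i (map_term f t1) (map_term f t2)
  end.

Definition idn {G : Type} (m : nat) (t : term G) : term G := Nat.iter m (@Id G) t.

Section FreePrecategory.
Variable G : Type.
Variable gdim : G -> nat.
Variable gsrc gtgt : G -> term G.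

Fixpoint srcT (k : nat) (t : term G) : term G :=
  match t with
  | Gen g => gsrc g
  | Id t' => t'
  | Comp i t1 t2 => if Nat.eqb (S i) k then srcT k t1
                    else Comp i (srcT k t1) (srcT k t2)
  end.

Fixpoint tgtT (k : nat) (t : term G) : term G :=
  match t with
  | Gen g => gtgt g
  | Id t' => t'
  | Comp i t1 t2 => if Nat.eqb (S i) k then tgtT k t2
                    else Comp i (tgtT k t1) (tgtT k t2)
  end.

(* m-fold iterated source / target of a k-cell; the i-source s_i of a
   k-cell t is [srcN (k - i) k t]. *)
Fixpoint srcN (m k : nat) (t : term G) : term G :=
  match m with 0 => t | S m' => srcN m' (pred k) (srcT k t) end.
Fixpoint tgtN (m k : nat) (t : term G) : term G :=
  match m with 0 => t | S m' => tgtN m' (pred k) (tgtT k t) end.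

(* [wf k t] : t denotes a k-cell of the free precategory;
   [eqv k t t'] : t and t' denote the same k-cell (the congruence generated
   by the axioms of precategories: associativity, units, functoriality of
   identities w.r.t. composition; no interchange law). *)
Inductive wf : nat -> term G -> Prop :=
| wf_gen : forall g, wf (gdim g) (Gen g)
| wf_id : forall k t, wf k t -> wf (S k) (Id t)
| wf_comp : forall k i t1 t2, i < k -> wf k t1 -> wf k t2 ->
    eqv i (tgtN (k - i) k t1) (srcN (k - i) k t2) -> wf k (Comp i t1 t2)
with eqv : nat -> term G -> term G -> Prop :=
| eqv_refl : forall k t, wf k t -> eqv k t t
| eqv_sym : forall k t t', eqv k t t' -> eqv k t' t
| eqv_trans : forall k t t' t'', eqv k t t' -> eqv k t' t'' -> eqv k t t''
| eqv_id : forall k t t', eqv k t t' -> eqv (S k) (Id t) (Id t')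
| eqv_comp : forall k i t1 t1' t2 t2', i < k -> eqv k t1 t1' -> eqv k t2 t2' ->
    eqv i (tgtN (k - i) k t1) (srcN (k - i) k t2) ->
    eqv k (Comp i t1 t2) (Comp i t1' t2')
| eqv_assoc : forall k i t1 t2 t3,
    wf k (Comp i (Comp i t1 t2) t3) -> wf k (Comp i t1 (Comp i t2 t3)) ->
    eqv k (Comp i (Comp i t1 t2) t3) (Comp i t1 (Comp i t2 t3))
| eqv_unitl : forall k i t, i < k -> wf k t ->
    eqv k (Comp i (idn (k - i) (srcN (k - i) k t)) t) t
| eqv_unitr : forall k i t, i < k -> wf k t ->
    eqv k (Comp i t (idn (k - i) (tgtN (k - i) k t))) t
| eqv_idcomp : forall k i t1 t2, wf k (Comp i t1 t2) ->
    eqv (S k) (Id (Comp i t1 t2)) (Comp i (Id t1) (Id t2)).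

Inductive supp : term G -> G -> Prop :=
| supp_gen : forall g, supp (Gen g) g
| supp_gsrc : forall g h, 0 < gdim g -> supp (gsrc g) h -> supp (Gen g) h
| supp_gtgt : forall g h, 0 < gdim g -> supp (gtgt g) h -> supp (Gen g) h
| supp_id : forall t h, supp t h -> supp (Id t) h
| supp_compl : forall i t1 t2 h, supp t1 h -> supp (Comp i t1 t2) h
| supp_compr : forall i t1 t2 h, supp t2 h -> supp (Comp i t1 t2) h.

End FreePrecategory.

Arguments srcT {G} gsrc _ _.
Arguments wf {G} gdim gsrc gtgt _ _.
Arguments eqv {G} gdim gsrc gtgt _ _ _.
Arguments supp {G} gdim gsrc gtgt _ _.
Arguments tgtT {G} gtgt _ _.

Record polygraph (n : option nat) := Polygraph {
  pgen : Type;
  pdim : pgen -> nat;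
  psrc : pgen -> term pgen;
  ptgt : pgen -> term pgen;
  pdim_le : forall g, le_inf (pdim g) n;
  psrc_wf : forall g k, pdim g = S k -> wf pdim psrc ptgt k (psrc g);
  ptgt_wf : forall g k, pdim g = S k -> wf pdim psrc ptgt k (ptgt g);
  pglob_src : forall g k, pdim g = S (S k) ->
    eqv pdim psrc ptgt k (srcT psrc (S k) (psrc g)) (srcT psrc (S k) (ptgt g));
  pglob_tgt : forall g k, pdim g = S (S k) ->
    eqv pdim psrc ptgt k (tgtT ptgt (S k) (psrc g)) (tgtT ptgt (S k) (ptgt g))
}.

Arguments pgen {n} _.
Arguments pdim {n} _ _.
Arguments psrc {n} _ _.
Arguments ptgt {n} _ _.

Definition pwf {n} (P : polygraph n) := wf (pdim P) (psrc P) (ptgt P).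
Definition peqv {n} (P : polygraph n) := eqv (pdim P) (psrc P) (ptgt P).
Definition psupp {n} (P : polygraph n) := supp (pdim P) (psrc P) (ptgt P).

Record pmorphism {n} (Q P : polygraph n) := PMorphism {
  pm_fun : pgen Q -> pgen P;
  pm_dim : forall g, pdim P (pm_fun g) = pdim Q g;
  pm_src : forall g k, pdim Q g = S k ->
    peqv P k (psrc P (pm_fun g)) (map_term pm_fun (psrc Q g));
  pm_tgt : forall g k, pdim Q g = S k ->
    peqv P k (ptgt P (pm_fun g)) (map_term pm_fun (ptgt Q g))
}.

Arguments pm_fun {n Q P} _ _.

Definition pmono {n} {Q P : polygraph n} (F : pmorphism Q P) : Prop :=
  forall g g', pm_fun F g = pm_fun F g' -> g = g'.

Definition pfinite {n} (P : polygraph n) : Prop :=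
  exists l : list (pgen P), forall g, In g l.

(* Main.v *)
Require Import Defs.
From Stdlib Require Import Arith List Lia ClassicalEpsilon ProofIrrelevance.

Fixpoint iterST {G} (gs gt : G -> term G) (bs : list bool) (k : nat) (t : term G) : term G :=
  match bs with
  | nil => t
  | b :: bs' => iterST gs gt bs' (pred k) (if b then srcT gs k t else tgtT gt k t)
  end.

Lemma srcN_iter {G} gs gt m : forall k (t : term G), srcN G gs m k t = iterST gs gt (repeat true m) k t.
Proof. induction m; intros; simpl; auto. Qed.
Lemma tgtN_iter {G} gs gt m : forall k (t : term G), tgtN G gt m k t = iterST gs gt (repeat false m) k t.
Proof. induction m; intros; simpl; auto. Qed.

Lemma iterST_app {G} gs gt bs1 : forall bs2 k (t : term G),
  iterST gs gt (bs1 ++ bs2) k t = iterST gs gt bs2 (k - length bs1) (iterST gs gt bs1 k t).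
Proof.
  induction bs1; intros; simpl. rewrite Nat.sub_0_r; auto.
  rewrite IHbs1. f_equal. lia.
Qed.

Lemma supp_leaf {G} gd gs gt (t : term G) : exists h, supp gd gs gt t h.
Proof.
  induction t. eexists; constructor. destruct IHt; eexists; constructor; eauto.
  destruct IHt1; eexists; apply supp_compl; eauto.
Qed.

Lemma supp_trans {G} gd gs gt (t : term G) g h :
  supp gd gs gt t g -> supp gd gs gt (Gen g) h -> supp gd gs gt t h.
Proof. induction 1; intros; try (econstructor; eauto; fail); auto.
Qed.

Lemma supp_idn {G} gd gs gt j (x : term G) h : supp gd gs gt (idn j x) h -> supp gd gs gt x h.
Proof. induction j; simpl; auto. intro H; inversion H; auto. Qed.

Lemma iter_comp {G} gd gs gt bs : forall k i (a b : term G) h,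
  supp gd gs gt (iterST gs gt bs k (Comp i a b)) h ->
  supp gd gs gt (iterST gs gt bs k a) h \/ supp gd gs gt (iterST gs gt bs k b) h.
Proof.
  induction bs; simpl; intros.
  - inversion H; auto.
  - destruct a; simpl in H;
    match type of H with context [if ?c then _ else _] => destruct c end;
    auto; apply IHbs in H; auto.
Qed.

Lemma iter_idn {G} gd gs gt bs : forall j k (x : term G) h,
  supp gd gs gt (iterST gs gt bs k (idn j x)) h ->
  supp gd gs gt x h \/ supp gd gs gt (iterST gs gt (skipn j bs) (k - j) x) h.
Proof.
  induction bs; simpl; intros.
  - left; eapply supp_idn; eauto.
  - destruct j; simpl in *.
    + right. rewrite Nat.sub_0_r. auto.
    + destruct a; simpl in H; apply IHbs in H; destruct H; auto;
      right; replace (k - S j) with (pred k - j) by lia; auto.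
Qed.

Definition Qp {G} gd gs gt k (t : term G) :=
  forall bs h, length bs <= k -> supp gd gs gt (iterST gs gt bs k t) h -> supp gd gs gt t h.

Lemma Q_Id {G} gd gs gt k (t : term G) : Qp gd gs gt k t -> Qp gd gs gt (S k) (Id t).
Proof.
  intros Q bs h L H. destruct bs; simpl in *; auto.
  apply supp_id. destruct b; simpl in H; eapply Q; eauto; lia.
Qed.

Lemma Q_Comp {G} gd gs gt k i (a b : term G) :
  Qp gd gs gt k a -> Qp gd gs gt k b -> Qp gd gs gt k (Comp i a b).
Proof.
  intros Qa Qb bs h L H. apply iter_comp in H as [H|H].
  apply supp_compl; eauto. apply supp_compr; eauto.
Qed.

Lemma Q_idn_src {G} gd gs gt k j (t : term G) h bs : Qp gd gs gt k t -> j <= k -> length bs <= k ->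
  supp gd gs gt (iterST gs gt bs k (idn j (srcN G gs j k t))) h -> supp gd gs gt t h.
Proof.
  intros Q Lj L H. apply iter_idn in H as [H|H].
  - rewrite (srcN_iter gs gt) in H. eapply Q; [|eauto]; rewrite ?repeat_length; auto.
  - rewrite (srcN_iter gs gt) in H. replace j with (length (repeat true j)) in H at 2 by apply repeat_length.
    rewrite <- iterST_app in H. eapply Q; [|eauto]; rewrite length_app, repeat_length, length_skipn. lia.
Qed.

Lemma Q_idn_tgt {G} gd gs gt k j (t : term G) h bs : Qp gd gs gt k t -> j <= k -> length bs <= k ->
  supp gd gs gt (iterST gs gt bs k (idn j (tgtN G gt j k t))) h -> supp gd gs gt t h.
Proof.
  intros Q Lj L H. apply iter_idn in H as [H|H].
  - rewrite (tgtN_iter gs gt) in H. eapply Q; [|eauto]; rewrite ?repeat_length; auto.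
  - rewrite (tgtN_iter gs gt) in H. replace j with (length (repeat false j)) in H at 2 by apply repeat_length.
    rewrite <- iterST_app in H. eapply Q; [|eauto]; rewrite length_app, repeat_length, length_skipn. lia.
Qed.

Definition QP {n} (P : polygraph n) := Qp (pdim P) (psrc P) (ptgt P).
Definition finsupp {n} (P : polygraph n) t := exists l, forall h, psupp P t h -> In h l.

Lemma wf_Q_fin {n} (P : polygraph n) N : forall k t, k <= N -> pwf P k t -> QP P k t /\ finsupp P t.
Proof.
  induction N as [|N IHN]; intros k t Hk H; unfold pwf in H; revert Hk;
  induction H; intro Hk.
  - destruct (pdim P g) eqn:E.
    + split. intros bs h L Hs. destruct bs; simpl in *; [auto|lia].
      exists (g :: nil). intros h Hs. inversion Hs; subst; simpl; auto; lia.
    + lia.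
  - lia.
  - destruct IHwf1 as [Q1 [l1 F1]]; auto. destruct IHwf2 as [Q2 [l2 F2]]; auto.
    split. apply Q_Comp; auto. exists (l1 ++ l2). intros h Hs; inversion Hs; subst; apply in_or_app; auto.
  - destruct (pdim P g) eqn:E.
    + split. intros bs h L Hs. destruct bs; simpl in *; [auto|lia].
      exists (g :: nil). intros h Hs. inversion Hs; subst; simpl; auto; lia.
    + destruct (IHN n0 (psrc P g)) as [Qs [ls Fs]]; [lia| apply psrc_wf; auto |].
      destruct (IHN n0 (ptgt P g)) as [Qt [lt Ft]]; [lia| apply ptgt_wf; auto |].
      split.
      * intros bs h L Hs. destruct bs as [|b bs]; simpl in *; [auto|].
        destruct b; simpl in Hs.
        -- apply supp_gsrc; [rewrite E; lia|]. eapply Qs; [|exact Hs]. simpl in L; lia.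
        -- apply supp_gtgt; [rewrite E; lia|]. eapply Qt; [|exact Hs]. simpl in L; lia.
      * exists (g :: ls ++ lt). intros h Hs. inversion Hs; subst; simpl; auto; right; apply in_or_app; auto.
  - destruct IHwf as [Q [l F]]; [lia|]. split. apply Q_Id; auto.
    exists l. intros h Hs; inversion Hs; auto.
  - destruct IHwf1 as [Q1 [l1 F1]]; auto. destruct IHwf2 as [Q2 [l2 F2]]; auto.
    split. apply Q_Comp; auto. exists (l1 ++ l2). intros h Hs; inversion Hs; subst; apply in_or_app; auto.
Qed.

Lemma wf_Q {n} (P : polygraph n) k t : pwf P k t -> QP P k t.
Proof. intro H; eapply (wf_Q_fin P k); eauto. Qed.
Lemma wf_fin {n} (P : polygraph n) k t : pwf P k t -> finsupp P t.
Proof. intro H; eapply (wf_Q_fin P k); eauto. Qed.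

Lemma wf_comp_inv {n} (P : polygraph n) k i t1 t2 : pwf P k (Comp i t1 t2) -> pwf P k t1 /\ pwf P k t2.
Proof. intro H; inversion H; auto. Qed.

Lemma eqv_Q {n} (P : polygraph n) k t t' : peqv P k t t' -> QP P k t /\ QP P k t'.
Proof.
  unfold peqv; induction 1.
  - split; apply wf_Q; auto.
  - tauto.
  - tauto.
  - split; apply Q_Id; tauto.
  - split; apply Q_Comp; tauto.
  - split; apply wf_Q; auto.
  - assert (Q : QP P k t) by (apply wf_Q; auto). split; auto.
    intros bs h L Hs. apply supp_compr. apply iter_comp in Hs as [Hs|Hs].
    eapply Q_idn_src; [exact Q| |exact L|exact Hs]; lia. eapply Q; eauto.
  - assert (Q : QP P k t) by (apply wf_Q; auto). split; auto.
    intros bs h L Hs. apply supp_compl. apply iter_comp in Hs as [Hs|Hs].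
    eapply Q; eauto. eapply Q_idn_tgt; [exact Q| |exact L|exact Hs]; lia.
  - apply wf_comp_inv in H as H'. destruct H'.
    split. apply Q_Id, wf_Q; auto. apply Q_Comp; apply Q_Id, wf_Q; auto.
Qed.

Lemma supp_comp_iff {G} gd gs gt i (a b : term G) h :
  supp gd gs gt (Comp i a b) h <-> supp gd gs gt a h \/ supp gd gs gt b h.
Proof. split; intro H. inversion H; auto. destruct H; [apply supp_compl|apply supp_compr]; auto. Qed.
Lemma supp_id_iff {G} gd gs gt (a : term G) h :
  supp gd gs gt (Id a) h <-> supp gd gs gt a h.
Proof. split; intro H. inversion H; auto. constructor; auto. Qed.

Lemma eqv_supp {n} (P : polygraph n) k t t' : peqv P k t t' -> forall h, psupp P t h <-> psupp P t' h.
Proof.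
  unfold peqv, psupp; induction 1; intro h; rewrite ?supp_comp_iff, ?supp_id_iff, ?supp_comp_iff.
  - tauto.
  - rewrite IHeqv; tauto.
  - rewrite IHeqv1; auto.
  - apply IHeqv.
  - rewrite IHeqv1, IHeqv2; tauto.
  - tauto.
  - assert (Q : QP P k t) by (apply wf_Q; auto).
    split; [intros [Hs|Hs]|]; auto.
    apply supp_idn in Hs. rewrite (srcN_iter _ (ptgt P)) in Hs. eapply Q; [|exact Hs]. rewrite repeat_length; lia.
  - assert (Q : QP P k t) by (apply wf_Q; auto).
    split; [intros [Hs|Hs]|]; auto.
    apply supp_idn in Hs. rewrite (tgtN_iter (psrc P) _) in Hs. eapply Q; [|exact Hs]. rewrite repeat_length; lia.
  - rewrite ?supp_id_iff. tauto.
Qed.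

Scheme wf_eqv_ind := Induction for wf Sort Prop with eqv_wf_ind := Induction for eqv Sort Prop.
Combined Scheme wf_eqv_mut from wf_eqv_ind, eqv_wf_ind.

Definition SG {n} (P : polygraph n) u := {h : pgen P | psupp P u h}.
Definition pr {n} (P : polygraph n) u (s : SG P u) : pgen P := proj1_sig s.
Definition emb {n} (P : polygraph n) u (d0 : SG P u) (g : pgen P) : SG P u :=
  match excluded_middle_informative (psupp P u g) with
  | left p => exist _ g p
  | right _ => d0 end.
Definition sub {n} (P : polygraph n) u t := forall h, psupp P t h -> psupp P u h.

Lemma emb_in {n} (P : polygraph n) u d0 g : psupp P u g -> pr P u (emb P u d0 g) = g.
Proof. intro H; unfold emb, pr; destruct excluded_middle_informative; simpl; tauto. Qed.

Lemma emb_proj {n} (P : polygraph n) u d0 (s : SG P u) : emb P u d0 (pr P u s) = s.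
Proof. destruct s as [g p]; unfold emb, pr; simpl; destruct excluded_middle_informative; [|tauto].
  f_equal; apply proof_irrelevance. Qed.

Definition sdim {n} (P : polygraph n) u (s : SG P u) := pdim P (pr P u s).
Definition ssrc {n} (P : polygraph n) u d0 (s : SG P u) := map_term (emb P u d0) (psrc P (pr P u s)).
Definition stgt {n} (P : polygraph n) u d0 (s : SG P u) := map_term (emb P u d0) (ptgt P (pr P u s)).

Lemma closure_src {n} (P : polygraph n) u g : psupp P u g -> 0 < pdim P g -> sub P u (psrc P g).
Proof. intros H D h Hh. eapply supp_trans; eauto. apply supp_gsrc; auto. Qed.
Lemma closure_tgt {n} (P : polygraph n) u g : psupp P u g -> 0 < pdim P g -> sub P u (ptgt P g).
Proof. intros H D h Hh. eapply supp_trans; eauto. apply supp_gtgt; auto. Qed.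

Lemma map_proj_emb {n} (P : polygraph n) u d0 t : sub P u t ->
  map_term (pr P u) (map_term (emb P u d0) t) = t.
Proof.
  unfold sub, psupp; induction t; simpl; intro H.
  - rewrite emb_in; auto. apply H; constructor.
  - rewrite IHt; auto. intros; apply H; constructor; auto.
  - rewrite IHt1, IHt2; auto; intros; apply H; [apply supp_compr|apply supp_compl]; auto.
Qed.

Lemma map_idn {G H} (f : G -> H) j t : map_term f (idn j t) = idn j (map_term f t).
Proof. induction j; simpl; auto. unfold idn in *; simpl; rewrite IHj; auto. Qed.

Lemma sub_comp {n} (P : polygraph n) u i a b : sub P u (Comp i a b) <-> sub P u a /\ sub P u b.
Proof. unfold sub, psupp. setoid_rewrite supp_comp_iff. firstorder. Qed.
Lemma sub_id {n} (P : polygraph n) u a : sub P u (Id a) <-> sub P u a.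
Proof. unfold sub, psupp. setoid_rewrite supp_id_iff. firstorder. Qed.

Lemma srcT_comm {n} (P : polygraph n) u d0 k t : sub P u t ->
  srcT (ssrc P u d0) k (map_term (emb P u d0) t) = map_term (emb P u d0) (srcT (psrc P) k t).
Proof.
  induction t; simpl; intro H.
  - unfold ssrc. rewrite emb_in; auto. apply H; constructor.
  - auto.
  - apply sub_comp in H as [H1 H2]. destruct k as [|k]; simpl; [|destruct (n0 =? k)]; simpl; rewrite ?IHt1, ?IHt2; auto.
Qed.
Lemma tgtT_comm {n} (P : polygraph n) u d0 k t : sub P u t ->
  tgtT (stgt P u d0) k (map_term (emb P u d0) t) = map_term (emb P u d0) (tgtT (ptgt P) k t).
Proof.
  induction t; simpl; intro H.
  - unfold stgt. rewrite emb_in; auto. apply H; constructor.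
  - auto.
  - apply sub_comp in H as [H1 H2]. destruct k as [|k]; simpl; [|destruct (n0 =? k)]; simpl; rewrite ?IHt1, ?IHt2; auto.
Qed.

Lemma sub_iter {n} (P : polygraph n) u k t bs : QP P k t -> sub P u t -> length bs <= k ->
  sub P u (iterST (psrc P) (ptgt P) bs k t).
Proof. intros Q S L h Hh. apply S. eapply Q; eauto. Qed.

Lemma iter_comm0 {n} (P : polygraph n) u d0 bs : forall k t,
  (forall bs', length bs' <= k -> sub P u (iterST (psrc P) (ptgt P) bs' k t)) -> length bs <= k ->
  iterST (ssrc P u d0) (stgt P u d0) bs k (map_term (emb P u d0) t)
  = map_term (emb P u d0) (iterST (psrc P) (ptgt P) bs k t).
Proof.
  induction bs as [|b bs IH]; intros k t S L; simpl; auto.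
  assert (S0 := S nil ltac:(simpl; lia)). simpl in S0.
  destruct b.
  - rewrite srcT_comm; auto. apply IH.
    + intros bs' L'. apply (S (true :: bs')). simpl in *; lia.
    + simpl in L; lia.
  - rewrite tgtT_comm; auto. apply IH.
    + intros bs' L'. apply (S (false :: bs')). simpl in *; lia.
    + simpl in L; lia.
Qed.
Lemma iter_comm {n} (P : polygraph n) u d0 bs k t : QP P k t -> sub P u t -> length bs <= k ->
  iterST (ssrc P u d0) (stgt P u d0) bs k (map_term (emb P u d0) t)
  = map_term (emb P u d0) (iterST (psrc P) (ptgt P) bs k t).
Proof. intros. apply iter_comm0; auto. intros; apply sub_iter; auto. Qed.

Lemma srcN_comm {n} (P : polygraph n) u d0 m k t : QP P k t -> sub P u t -> m <= k ->
  srcN _ (ssrc P u d0) m k (map_term (emb P u d0) t) = map_term (emb P u d0) (srcN _ (psrc P) m k t).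
Proof. intros. rewrite (srcN_iter _ (stgt P u d0)), (srcN_iter _ (ptgt P)). apply iter_comm; auto.
  rewrite repeat_length; auto. Qed.
Lemma tgtN_comm {n} (P : polygraph n) u d0 m k t : QP P k t -> sub P u t -> m <= k ->
  tgtN _ (stgt P u d0) m k (map_term (emb P u d0) t) = map_term (emb P u d0) (tgtN _ (ptgt P) m k t).
Proof. intros. rewrite (tgtN_iter (ssrc P u d0)), (tgtN_iter (psrc P)). apply iter_comm; auto.
  rewrite repeat_length; auto. Qed.
Lemma sub_srcN {n} (P : polygraph n) u m k t : QP P k t -> sub P u t -> m <= k -> sub P u (srcN _ (psrc P) m k t).
Proof. intros. rewrite (srcN_iter _ (ptgt P)). apply sub_iter; auto. rewrite repeat_length; auto. Qed.
Lemma sub_tgtN {n} (P : polygraph n) u m k t : QP P k t -> sub P u t -> m <= k -> sub P u (tgtN _ (ptgt P) m k t).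
Proof. intros. rewrite (tgtN_iter (psrc P)). apply sub_iter; auto. rewrite repeat_length; auto. Qed.

Lemma transfer {n} (P : polygraph n) u d0 :
  (forall k t, pwf P k t -> sub P u t -> wf (sdim P u) (ssrc P u d0) (stgt P u d0) k (map_term (emb P u d0) t)) /\
  (forall k t t', peqv P k t t' -> sub P u t ->
     eqv (sdim P u) (ssrc P u d0) (stgt P u d0) k (map_term (emb P u d0) t) (map_term (emb P u d0) t')).
Proof.
  unfold pwf, peqv.
  apply (wf_eqv_mut _ (pdim P) (psrc P) (ptgt P)
    (fun k t _ => sub P u t -> wf (sdim P u) (ssrc P u d0) (stgt P u d0) k (map_term (emb P u d0) t))
    (fun k t t' _ => sub P u t -> eqv (sdim P u) (ssrc P u d0) (stgt P u d0) k (map_term (emb P u d0) t) (map_term (emb P u d0) t'))).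
  - intros g S. simpl. replace (pdim P g) with (sdim P u (emb P u d0 g)).
    apply wf_gen. unfold sdim; rewrite emb_in; auto. apply S; constructor.
  - intros k t w IH S. simpl. apply wf_id. apply IH. apply sub_id; auto.
  - intros k i t1 t2 Hi w1 IH1 w2 IH2 e IHe S. apply sub_comp in S as [S1 S2]. simpl.
    assert (Q1 := wf_Q P k t1 w1). assert (Q2 := wf_Q P k t2 w2).
    apply wf_comp; auto. rewrite tgtN_comm, srcN_comm; auto; try lia.
    apply IHe. apply sub_tgtN; auto; lia.
  - intros k t w IH S. apply eqv_refl; auto.
  - intros k t t' e IH S. apply eqv_sym. apply IH. intros h Hh. apply S. exact (proj1 (eqv_supp P k t t' e h) Hh).
  - intros k t t' t'' e1 IH1 e2 IH2 S. eapply eqv_trans. apply IH1; auto. apply IH2.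
    intros h Hh. apply S. exact (proj2 (eqv_supp P k t t' e1 h) Hh).
  - intros k t t' e IH S. simpl. apply eqv_id. apply IH. apply sub_id; auto.
  - intros k i t1 t1' t2 t2' Hi e1 IH1 e2 IH2 e IHe S. apply sub_comp in S as [S1 S2]. simpl.
    assert (Q1 := proj1 (eqv_Q P k t1 t1' e1)). assert (Q2 := proj1 (eqv_Q P k t2 t2' e2)).
    apply eqv_comp; auto. rewrite tgtN_comm, srcN_comm; auto; try lia.
    apply IHe. apply sub_tgtN; auto; lia.
  - intros k i t1 t2 t3 w1 IH1 w2 IH2 S. simpl. apply eqv_assoc.
    + apply (IH1 S).
    + apply (IH2). rewrite !sub_comp in *. tauto.
  - intros k i t Hi w IH S. apply sub_comp in S as [S1 S2]. simpl.
    rewrite map_idn, <- srcN_comm; auto; try lia. apply eqv_unitl; auto. apply wf_Q; auto.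
  - intros k i t Hi w IH S. apply sub_comp in S as [S1 S2]. simpl.
    rewrite map_idn, <- tgtN_comm; auto; try lia. apply eqv_unitr; auto. apply wf_Q; auto.
  - intros k i t1 t2 w IH S. simpl. apply eqv_idcomp. apply (IH). apply sub_id; auto.
Qed.

Lemma Pt_dim_le {n} (P : polygraph n) u : forall g : SG P u, le_inf (sdim P u g) n.
Proof. intro; apply pdim_le. Qed.
Lemma Pt_src_wf {n} (P : polygraph n) u d0 : forall (g : SG P u) k, sdim P u g = S k ->
  wf (sdim P u) (ssrc P u d0) (stgt P u d0) k (ssrc P u d0 g).
Proof. intros g k E. apply (proj1 (transfer P u d0)). apply psrc_wf; auto.
  apply closure_src. exact (proj2_sig g). unfold sdim, pr in *; lia. Qed.
Lemma Pt_tgt_wf {n} (P : polygraph n) u d0 : forall (g : SG P u) k, sdim P u g = S k ->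
  wf (sdim P u) (ssrc P u d0) (stgt P u d0) k (stgt P u d0 g).
Proof. intros g k E. apply (proj1 (transfer P u d0)). apply ptgt_wf; auto.
  apply closure_tgt. exact (proj2_sig g). unfold sdim, pr in *; lia. Qed.
Lemma Pt_glob_src {n} (P : polygraph n) u d0 : forall (g : SG P u) k, sdim P u g = S (S k) ->
  eqv (sdim P u) (ssrc P u d0) (stgt P u d0) k (srcT (ssrc P u d0) (S k) (ssrc P u d0 g))
      (srcT (ssrc P u d0) (S k) (stgt P u d0 g)).
Proof. intros g k E. unfold sdim in E.
  assert (Ss := closure_src P u (pr P u g) (proj2_sig g) ltac:(rewrite E; lia)).
  assert (St := closure_tgt P u (pr P u g) (proj2_sig g) ltac:(rewrite E; lia)).
  assert (Qs := wf_Q P _ _ (psrc_wf _ P (pr P u g) (S k) E)).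
  change (ssrc P u d0 g) with (map_term (emb P u d0) (psrc P (pr P u g))); change (stgt P u d0 g) with (map_term (emb P u d0) (ptgt P (pr P u g))). rewrite !srcT_comm; auto.
  apply (proj2 (transfer P u d0)). apply pglob_src; auto.
  apply (sub_iter P u (S k) _ (true :: nil)); auto. simpl; lia. Qed.
Lemma Pt_glob_tgt {n} (P : polygraph n) u d0 : forall (g : SG P u) k, sdim P u g = S (S k) ->
  eqv (sdim P u) (ssrc P u d0) (stgt P u d0) k (tgtT (stgt P u d0) (S k) (ssrc P u d0 g))
      (tgtT (stgt P u d0) (S k) (stgt P u d0 g)).
Proof. intros g k E. unfold sdim in E.
  assert (Ss := closure_src P u (pr P u g) (proj2_sig g) ltac:(rewrite E; lia)).
  assert (St := closure_tgt P u (pr P u g) (proj2_sig g) ltac:(rewrite E; lia)).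
  assert (Qs := wf_Q P _ _ (psrc_wf _ P (pr P u g) (S k) E)).
  change (ssrc P u d0 g) with (map_term (emb P u d0) (psrc P (pr P u g))); change (stgt P u d0 g) with (map_term (emb P u d0) (ptgt P (pr P u g))). rewrite !tgtT_comm; auto.
  apply (proj2 (transfer P u d0)). apply pglob_tgt; auto.
  apply (sub_iter P u (S k) _ (false :: nil)); auto. simpl; lia. Qed.

Definition Pt {n} (P : polygraph n) u d0 : polygraph n :=
  Polygraph n (SG P u) (sdim P u) (ssrc P u d0) (stgt P u d0) (Pt_dim_le P u)
    (Pt_src_wf P u d0) (Pt_tgt_wf P u d0) (Pt_glob_src P u d0) (Pt_glob_tgt P u d0).

Lemma Ft_src {n} (P : polygraph n) u d0 : forall (g : pgen (Pt P u d0)) k, pdim (Pt P u d0) g = S k ->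
  peqv P k (psrc P (pr P u g)) (map_term (pr P u) (psrc (Pt P u d0) g)).
Proof. intros g k E. simpl in *. unfold ssrc. rewrite map_proj_emb.
  apply eqv_refl. apply psrc_wf; auto. apply closure_src. exact (proj2_sig g). unfold sdim, pr in *; lia. Qed.
Lemma Ft_tgt {n} (P : polygraph n) u d0 : forall (g : pgen (Pt P u d0)) k, pdim (Pt P u d0) g = S k ->
  peqv P k (ptgt P (pr P u g)) (map_term (pr P u) (ptgt (Pt P u d0) g)).
Proof. intros g k E. simpl in *. unfold stgt. rewrite map_proj_emb.
  apply eqv_refl. apply ptgt_wf; auto. apply closure_tgt. exact (proj2_sig g). unfold sdim, pr in *; lia. Qed.

Definition Ft {n} (P : polygraph n) u d0 : pmorphism (Pt P u d0) P :=
  PMorphism n (Pt P u d0) P (pr P u) (fun g => eq_refl) (Ft_src P u d0) (Ft_tgt P u d0).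

Lemma supp_transfer {n} (P : polygraph n) u d0 t h : psupp P t h -> sub P u t ->
  psupp (Pt P u d0) (map_term (emb P u d0) t) (emb P u d0 h).
Proof.
  unfold psupp; induction 1; intro S; simpl.
  - constructor.
  - assert (Sg : psupp P u g) by (apply S; constructor).
    apply supp_gsrc. simpl; unfold sdim; rewrite emb_in; auto.
    simpl. unfold ssrc. rewrite emb_in; auto. apply IHsupp. apply closure_src; auto.
  - assert (Sg : psupp P u g) by (apply S; constructor).
    apply supp_gtgt. simpl; unfold sdim; rewrite emb_in; auto.
    simpl. unfold stgt. rewrite emb_in; auto. apply IHsupp. apply closure_tgt; auto.
  - constructor. apply IHsupp. apply sub_id; auto.
  - apply supp_compl. apply IHsupp. apply sub_comp in S; tauto.
  - apply supp_compr. apply IHsupp. apply sub_comp in S; tauto.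
Qed.

Theorem proposition4p3 (n : option nat) (P : polygraph n) (k : nat) (u : term (pgen P)) :
  le_inf k n -> pwf P k u ->
  exists (Pt : polygraph n) (F : pmorphism Pt P),
    pfinite Pt /\ pmono F /\
    exists ut : term (pgen Pt),
      pwf Pt k ut /\ peqv P k (map_term (pm_fun F) ut) u /\
      (forall g : pgen Pt, psupp Pt ut g).
Proof.
  intros Hk Hu.
  destruct (supp_leaf (pdim P) (psrc P) (ptgt P) u) as [h0 H0].
  set (d0 := exist (fun h => psupp P u h) h0 H0 : SG P u).
  assert (Su : sub P u u) by (intros h H; exact H).
  exists (Pt P u d0), (Ft P u d0). split; [|split].
  - destruct (wf_fin P k u Hu) as [l Hl]. exists (map (emb P u d0) l).
    intro g. rewrite <- (emb_proj P u d0 g). apply in_map. apply Hl. exact (proj2_sig g).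
  - intros g g' E. simpl in E. rewrite <- (emb_proj P u d0 g), <- (emb_proj P u d0 g'), E. reflexivity.
  - exists (map_term (emb P u d0) u). split; [|split].
    + apply (proj1 (transfer P u d0)); auto.
    + simpl. rewrite map_proj_emb; auto. apply eqv_refl; auto.
    + intro g. rewrite <- (emb_proj P u d0 g). apply supp_transfer; auto. exact (proj2_sig g).
Qed.
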